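(* Let $a$ be a real number. The inequality $S_{n,a}(x)>0$ holds for all integers $n\ge1$ and all real $x\in(0,\pi)$ if and only if $a\ge1$.
   Context: For a real number $a$ and integers $0\le m$, $\binom{m+a}{m}=\frac{(a+1)(a+2)\cdots(a+m)}{m!}$ (equal to $1$ when $m=0$). For an integer $n\ge1$, $S_{n,a}(x)=\sum_{j=1}^n\binom{n+a-j}{n-j}\sin(jx)$. *)

(* Defs.v *)
From Stdlib Require Import Reals Arith.
Open Scope R_scope.

Fixpoint rise (a : R) (m : nat) : R :=
  match m with
  | O => 1
  | S k => rise a k * (a + INR (S k))
  end.

(* Generalized binomial  binom(m+a, m) = (a+1)...(a+m)/m!  (= 1 when m = 0). *)
Definition gbinom (m : nat) (a : R) : R := rise a m / INR (fact m).

(* S_{n,a}(x) = sum_{j=1}^n binom(n+a-j, n-j) sin(j x). *)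
Fixpoint Ssum (n : nat) (a x : R) (k : nat) : R :=
  match k with
  | O => 0
  | S j => Ssum n a x j + gbinom (n - S j) a * sin (INR (S j) * x)
  end.

Definition S_na (n : nat) (a x : R) : R := Ssum n a x n.

(* Main.v *)
Require Import Defs.
From Stdlib Require Import Reals Arith Lra Lia.
Open Scope R_scope.

Fixpoint sumR (n : nat) (f : nat -> R) : R :=
  match n with O => 0 | S k => sumR k f + f k end.

Lemma sumR_S n f : sumR (S n) f = sumR n f + f n.
Proof. reflexivity. Qed.

Lemma Ssum_eq n a x k :
  Ssum n a x k = sumR k (fun j => gbinom (n - S j) a * sin (INR (S j) * x)).
Proof. induction k; simpl; [reflexivity| rewrite IHk; reflexivity]. Qed.

Lemma sumR_ext n f g : (forall i, (i < n)%nat -> f i = g i) -> sumR n f = sumR n g.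
Proof.
  induction n; intro H; simpl; [reflexivity|].
  rewrite IHn by (intros; apply H; lia). rewrite H by lia. reflexivity.
Qed.

Lemma sumR_plus n f g : sumR n (fun i => f i + g i) = sumR n f + sumR n g.
Proof. induction n; simpl; [ring| rewrite IHn; ring]. Qed.

Lemma sumR_scal n c f : sumR n (fun i => c * f i) = c * sumR n f.
Proof. induction n; simpl; [ring| rewrite IHn; ring]. Qed.

Lemma sumR_shift n f : sumR (S n) f = f 0%nat + sumR n (fun j => f (S j)).
Proof. induction n; simpl in *; [ring| rewrite IHn; ring]. Qed.

Lemma sumR_rev n f : sumR n f = sumR n (fun j => f (n - S j)%nat).
Proof.
  induction n; [reflexivity|].
  rewrite (sumR_S n f), IHn.
  rewrite (sumR_shift n (fun j => f (S n - S j)%nat)).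
  replace (S n - 1)%nat with n by lia. simpl. ring.
Qed.

Lemma sumR_nonneg n f : (forall i, (i < n)%nat -> 0 <= f i) -> 0 <= sumR n f.
Proof.
  induction n; intro H; simpl; [lra|].
  assert (0 <= sumR n f) by (apply IHn; intros; apply H; lia).
  assert (0 <= f n) by (apply H; lia). lra.
Qed.

Lemma sumR_exch n g :
  sumR n (fun j => sumR (n - j) (fun i => g i j))
  = sumR n (fun i => sumR (n - i) (fun j => g i j)).
Proof.
  induction n; [reflexivity|].
  assert (H1 : forall h : nat -> nat -> R,
    sumR (S n) (fun j => sumR (S n - j) (fun i => h i j)) =
    sumR n (fun j => sumR (n - j) (fun i => h i j)) + sumR (S n) (fun j => h (n - j)%nat j)).
  { intro h.
    rewrite (sumR_ext (S n) _ (fun j => sumR (n-j) (fun i => h i j) + h (n-j)%nat j)).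
    - rewrite sumR_plus. rewrite (sumR_S n (fun j => sumR (n - j) (fun i => h i j))).
      rewrite Nat.sub_diag. simpl (sumR 0 _). ring.
    - intros j Hj. replace (S n - j)%nat with (S (n - j)) by lia. reflexivity. }
  pose proof (H1 (fun p q => g q p)) as H2. cbv beta in H2.
  rewrite (H1 g), H2, IHn. f_equal.
  rewrite sumR_rev. apply sumR_ext. intros i Hi.
  replace (n - (S n - S i))%nat with i by lia.
  replace (S n - S i)%nat with (n - i)%nat by lia. reflexivity.
Qed.

Definition Q (x : R) (c : nat -> R) (n : nat) :=
  sumR n (fun j => c (n - S j)%nat * sin (INR (S j) * x)).

Lemma conv x c d e n :
  (forall m, c m = sumR (S m) (fun i => d i * e (m - i)%nat)) ->
  Q x c n = sumR n (fun i => d i * Q x e (n - i)).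
Proof.
  intro Hc. unfold Q.
  transitivity (sumR n (fun j => sumR (n - j)
     (fun i => d i * e (n - S j - i)%nat * sin (INR (S j) * x)))).
  { apply sumR_ext; intros j Hj. rewrite Hc.
    replace (S (n - S j)) with (n - j)%nat by lia.
    rewrite Rmult_comm, <- sumR_scal. apply sumR_ext; intros; ring. }
  rewrite sumR_exch. apply sumR_ext; intros i Hi. rewrite <- sumR_scal.
  apply sumR_ext; intros j Hj.
  replace (n - S j - i)%nat with (n - i - S j)%nat by lia. ring.
Qed.

Lemma rise_shift b m : rise (b - 1) (S m) = b * rise b m.
Proof.
  induction m.
  - simpl. ring.
  - change (rise (b - 1) (S (S m))) with (rise (b-1) (S m) * (b - 1 + INR (S (S m)))).
    change (rise b (S m)) with (rise b m * (b + INR (S m))).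
    rewrite IHm. rewrite (S_INR (S m)). ring.
Qed.

Lemma pascal b m : gbinom (S m) b = gbinom m b + gbinom (S m) (b - 1).
Proof.
  unfold gbinom. rewrite rise_shift.
  change (rise b (S m)) with (rise b m * (b + INR (S m))).
  rewrite fact_simpl, mult_INR.
  assert (0 < INR (fact m)) by apply INR_fact_lt_0.
  assert (0 < INR (S m)) by (apply lt_0_INR; lia).
  field. lra.
Qed.

Lemma gb_sum b m : gbinom m b = sumR (S m) (fun i => gbinom i (b - 1)).
Proof.
  induction m.
  - unfold gbinom; simpl. ring.
  - rewrite pascal, IHm. reflexivity.
Qed.

Lemma coef a m : gbinom m a = sumR (S m) (fun i => gbinom i (a - 2) * INR (S (m - i))).
Proof.
  induction m.
  - unfold gbinom; simpl. ring.
  - rewrite pascal, IHm, (gb_sum (a - 1)).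
    replace (a - 1 - 1) with (a - 2) by ring.
    rewrite (sumR_ext (S (S m)) (fun i => gbinom i (a - 2) * INR (S (S m - i)))
       (fun i => gbinom i (a - 2) * INR (S m - i) + gbinom i (a - 2))).
    + rewrite sumR_plus. rewrite (sumR_S (S m) (fun i => gbinom i (a - 2) * INR (S m - i))).
      rewrite Nat.sub_diag. simpl (INR 0).
      rewrite (sumR_ext (S m) (fun i => gbinom i (a - 2) * INR (S m - i))
                (fun i => gbinom i (a - 2) * INR (S (m - i)))).
      * ring.
      * intros i Hi. replace (S m - i)%nat with (S (m - i)) by lia. reflexivity.
    + intros i Hi. replace (S (S m) - i)%nat with (S (S m - i)) by lia.
      rewrite S_INR. ring.
Qed.

Lemma rise_nonneg b m : 0 <= b + 1 -> 0 <= rise b m.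
Proof.
  intro Hb. induction m; [simpl; lra|].
  change (rise b (S m)) with (rise b m * (b + INR (S m))).
  apply Rmult_le_pos; [assumption|].
  pose proof (pos_INR m). rewrite S_INR. lra.
Qed.

Lemma gbinom_nonneg b m : 0 <= b + 1 -> 0 <= gbinom m b.
Proof.
  intro Hb. unfold gbinom. apply Rmult_le_pos; [apply rise_nonneg; auto|].
  left. apply Rinv_0_lt_compat, INR_fact_lt_0.
Qed.

Lemma D_closed x k :
  2 * (1 - cos x) * sumR k (fun j => sin (INR (S j) * x))
  = sin x + sin (INR k * x) - sin (INR (S k) * x).
Proof.
  induction k.
  - simpl. rewrite Rmult_0_l, sin_0, Rmult_1_l. ring.
  - rewrite sumR_S, Rmult_plus_distr_l, IHk.
    assert (E1 : INR (S (S k)) * x = INR (S k) * x + x) by (rewrite (S_INR (S k)); ring).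
    assert (E2 : INR k * x = INR (S k) * x - x) by (rewrite (S_INR k); ring).
    rewrite E1, E2, sin_plus, sin_minus. ring.
Qed.

Lemma F_closed x m :
  2 * (1 - cos x) * sumR m (fun j => INR (m - j) * sin (INR (S j) * x))
  = INR (S m) * sin x - sin (INR (S m) * x).
Proof.
  induction m.
  - simpl. replace (1 * x) with x by ring. ring.
  - rewrite (sumR_ext (S m) _ (fun j => INR (m - j) * sin (INR (S j) * x) + sin (INR (S j) * x))).
    + rewrite sumR_plus, Rmult_plus_distr_l, D_closed.
      rewrite (sumR_S m (fun j => INR (m - j) * sin (INR (S j) * x))).
      rewrite Nat.sub_diag. simpl (INR 0). rewrite Rmult_0_l, Rplus_0_r.
      rewrite IHm. rewrite (S_INR (S m)). ring.
    + intros j Hj. replace (S m - j)%nat with (S (m - j)) by lia. rewrite S_INR. ring.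
Qed.

Lemma sin_mult_le x : 0 < x < PI -> forall k,
  Rabs (sin (INR k * x)) <= INR k * sin x.
Proof.
  intros Hx k. pose proof (sin_gt_0 x (proj1 Hx) (proj2 Hx)).
  induction k.
  - simpl. rewrite Rmult_0_l, sin_0, Rabs_R0. lra.
  - rewrite S_INR, Rmult_plus_distr_r, Rmult_1_l, sin_plus.
    eapply Rle_trans; [apply Rabs_triang|]. rewrite !Rabs_mult.
    pose proof (COS_bound x). pose proof (COS_bound (INR k * x)).
    assert (Rabs (cos x) <= 1) by (apply Rabs_le; lra).
    assert (Rabs (cos (INR k * x)) <= 1) by (apply Rabs_le; lra).
    rewrite (Rabs_right (sin x)) by lra.
    pose proof (Rabs_pos (sin (INR k * x))). pose proof (Rabs_pos (cos x)).
    pose proof (Rabs_pos (cos (INR k * x))).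
    assert (Rabs (sin (INR k * x)) * Rabs (cos x) <= Rabs (sin (INR k * x))).
    { rewrite <- (Rmult_1_r (Rabs (sin (INR k * x)))) at 2. apply Rmult_le_compat_l; lra. }
    assert (Rabs (cos (INR k * x)) * sin x <= sin x).
    { rewrite <- (Rmult_1_l (sin x)) at 2. apply Rmult_le_compat_r; lra. }
    lra.
Qed.

Lemma sin_mult_lt x : 0 < x < PI -> forall k, (1 <= k)%nat ->
  Rabs (sin (INR (S k) * x)) < INR (S k) * sin x.
Proof.
  intros Hx k Hk. pose proof (sin_gt_0 x (proj1 Hx) (proj2 Hx)).
  pose proof (sin_mult_le x Hx k) as Hle.
  assert (HK : 1 <= INR k) by (apply (le_INR 1); lia).
  rewrite S_INR, Rmult_plus_distr_r, Rmult_1_l, sin_plus.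
  eapply Rle_lt_trans; [apply Rabs_triang|]. rewrite !Rabs_mult.
  pose proof (sin2_cos2 x). unfold Rsqr in *.
  assert (Rabs (cos x) < 1).
  { apply Rabs_def1; nra. }
  pose proof (COS_bound (INR k * x)).
  assert (Rabs (cos (INR k * x)) <= 1) by (apply Rabs_le; lra).
  rewrite (Rabs_right (sin x)) by lra.
  pose proof (Rabs_pos (sin (INR k * x))). pose proof (Rabs_pos (cos x)).
  pose proof (Rabs_pos (cos (INR k * x))).
  assert (Rabs (sin (INR k * x)) * Rabs (cos x) <= INR k * sin x * Rabs (cos x)).
  { apply Rmult_le_compat_r; lra. }
  assert (INR k * sin x * Rabs (cos x) < INR k * sin x).
  { rewrite <- (Rmult_1_r (INR k * sin x)) at 2. apply Rmult_lt_compat_l; nra. }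
  assert (Rabs (cos (INR k * x)) * sin x <= sin x).
  { rewrite <- (Rmult_1_l (sin x)) at 2. apply Rmult_le_compat_r; lra. }
  rewrite Rmult_plus_distr_r. lra.
Qed.

Lemma Fe_pos x m : 0 < x < PI -> (1 <= m)%nat -> 0 < Q x (fun l => INR (S l)) m.
Proof.
  intros Hx Hm. unfold Q.
  rewrite (sumR_ext m _ (fun j => INR (m - j) * sin (INR (S j) * x))).
  2:{ intros j Hj. replace (S (m - S j)) with (m - j)%nat by lia. reflexivity. }
  pose proof (F_closed x m) as HF.
  pose proof (sin_mult_lt x Hx m Hm).
  pose proof (Rle_abs (sin (INR (S m) * x))).
  pose proof (sin2_cos2 x). unfold Rsqr in *.
  pose proof (sin_gt_0 x (proj1 Hx) (proj2 Hx)).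
  assert (cos x < 1) by nra.
  set (F := sumR m _) in *. nra.
Qed.

Lemma Fe_nonneg x m : 0 < x < PI -> 0 <= Q x (fun l => INR (S l)) m.
Proof.
  intros Hx. destruct m.
  - unfold Q; simpl; lra.
  - left. apply Fe_pos; auto; lia.
Qed.

Lemma S2 a x : S_na 2 a x = sin x * (a + 1 + 2 * cos x).
Proof.
  unfold S_na. simpl. unfold gbinom. simpl.
  replace ((1 + 1) * x) with (2 * x) by ring. rewrite sin_2a.
  replace (1 * x) with x by ring. field.
Qed.

Theorem theorem3p4 (a : R) :
  (forall (n : nat) (x : R), (1 <= n)%nat -> 0 < x < PI -> S_na n a x > 0)
  <-> 1 <= a.
Proof.
  split.
  - intro H. destruct (Rle_lt_dec 1 a) as [Ha|Ha]; [assumption|exfalso].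
    set (dl := Rmin 1 (1 - a)).
    assert (Hd1 : dl <= 1) by apply Rmin_l.
    assert (Hd2 : dl <= 1 - a) by apply Rmin_r.
    assert (Hd0 : 0 < dl) by (unfold dl; apply Rmin_glb_lt; lra).
    pose proof PI2_1. pose proof PI2_Rlt_PI.
    assert (Hx : 0 < PI - dl < PI) by lra.
    specialize (H 2%nat (PI - dl) ltac:(lia) Hx).
    rewrite S2, sin_PI_x, Rtrigo_facts.cos_pi_minus in H.
    pose proof (sin_gt_0 dl Hd0 ltac:(lra)).
    replace dl with (2 * (dl / 2)) in H at 2 by field.
    rewrite cos_2a_sin in H.
    pose proof (sin_lt_x (dl / 2) ltac:(lra)).
    pose proof (sin_gt_0 (dl / 2) ltac:(lra) ltac:(lra)).
    assert (sin (dl / 2) * sin (dl / 2) <= dl / 2 * (dl / 2)) by nra.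
    assert (a + 1 + 2 * - (1 - 2 * sin (dl / 2) * sin (dl / 2)) <= 0) by nra.
    nra.
  - intros Ha n x Hn Hx.
    unfold S_na. rewrite Ssum_eq.
    change (sumR n (fun j => gbinom (n - S j) a * sin (INR (S j) * x)))
      with (Q x (fun m => gbinom m a) n).
    rewrite (conv x _ (fun i => gbinom i (a - 2)) (fun l => INR (S l)) n (coef a)).
    destruct n as [|n']; [lia|].
    rewrite sumR_shift.
    assert (0 < Q x (fun l => INR (S l)) (S n' - 0)).
    { apply Fe_pos; auto; lia. }
    assert (gbinom 0 (a - 2) = 1) by (unfold gbinom; simpl; field).
    assert (0 <= sumR n' (fun j => gbinom (S j) (a - 2) * Q x (fun l => INR (S l)) (S n' - S j))).
    { apply sumR_nonneg. intros i Hi. apply Rmult_le_pos.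
      - apply gbinom_nonneg; lra.
      - apply Fe_nonneg; auto. }
    nra.
Qed.
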